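(* Let $\mathbb{F}$ be a field and $(\mathcal{C},f,m)$ a Floer triple over $\mathbb{F}$. Then the associated bidirect system of chain complexes $(CM,p,i,\partial)$, indexed by $A=B=(\mathbb{R},\le)$, is tame; i.e. the maps $\mu_a$ ($a\in\mathbb{R}$), $\nu^b$ ($b\in\mathbb{R}$) and $\mu$ are isomorphisms.
   Context: A Floer triple $(\mathcal{C},f,m)$ over a field $\mathbb{F}$: a set $\mathcal{C}$, $f\colon\mathcal{C}\to\mathbb{R}$, $m\colon\mathcal{C}\times\mathcal{C}\to\mathbb{F}$ with (i) $\mathcal{C}_a^b=\{c: a\le f(c)\le b\}$ finite for all $a\le b$; (ii) $m(c_1,c_2)\ne0\Rightarrow f(c_1)<f(c_2)$; (iii) $\sum_{c_2}m(c_1,c_2)m(c_2,c_3)=0$ for all $c_1,c_3$. $CM_a^b$ is the $\mathbb{F}$-vector space with basis $\mathcal{C}_a^b$ (zero if $a>b$), $\partial_a^b c=\sum_{c'\in\mathcal{C}_a^b}m(c',c)c'$, $HM_a^b$ its homology. For $a_1\le a_2$, $p^b_{a_2,a_1}\colon CM^b_{a_1}\to CM^b_{a_2}$ sends $c\mapsto c$ if $f(c)\ge a_2$ and $c\mapsto0$ otherwise; for $b_1\le b_2$, $i_a^{b_2,b_1}$ is the inclusion $CM_a^{b_1}\to CM_a^{b_2}$. Limits: $\varprojlim_a$ of a system with maps $X_{a_1}\to X_{a_2}$ ($a_1\le a_2$) = compatible families; $\varinjlim_b$ of a system with maps $X^{b_1}\to X^{b_2}$ = direct sum modulo identifying elements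 with their images. Let $L^b=\varprojlim_a CM_a^b$ (w.r.t. $p^b$) and $D_a=\varinjlim_b CM_a^b$ (w.r.t. $i_a$), chain complexes, with canonical maps $i_a^b\colon CM_a^b\to D_a$. Define $\mu_a\colon\varinjlim_b HM_a^b\to H(D_a)$ induced by $[x]\mapsto[i_a^bx]$; $\mu\colon\varinjlim_b H(L^b)\to H(\varinjlim_b L^b)$ induced by the canonical maps $L^b\to\varinjlim_b L$; $\nu^b\colon H(L^b)\to\varprojlim_a HM_a^b$, $[(x_a)_a]\mapsto([x_a])_a$. *)

(* Defs.v *)
From Stdlib Require Import Reals ClassicalEpsilon.
From mathcomp Require Import all_boot all_algebra.

Set Implicit Arguments.
Unset Strict Implicit.
Unset Printing Implicit Defensive.

Import GRing.Theory.
Local Open Scope ring_scope.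

Section FloerDefs.

Variables (F : fieldType) (C : Type) (f : C -> R) (m : C -> C -> F).

(* Chains: F-valued functions on the generating set C.  An element of the
   vector space with basis C_a^b is identified with its coefficient function
   (which vanishes outside C_a^b). *)
Definition chain := C -> F.
Definition czero : chain := fun _ => 0.
Definition csub (x y : chain) : chain := fun c => x c - y c.

Definition Cab (a b : R) (c : C) : Prop := Rle a (f c) /\ Rle (f c) b.

Definition fsum (g : C -> F) (s : F) : Prop :=
  exists l : seq C, List.NoDup l /\ (forall c, g c <> 0 -> List.In c l)
                    /\ s = \sum_(c <- l) g c.

(* the value of a finite sum (junk if the support is not finite) *)
Definition Fsum (g : C -> F) : F := epsilon (inhabits 0) (fsum g).

Definition floer_triple : Prop :=
  (forall a b, Rle a b -> exists l : seq C, forall c, Cab a b c -> List.In c l)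
  /\ (forall c1 c2, m c1 c2 <> 0 -> Rlt (f c1) (f c2))
  /\ (forall c1 c3, fsum (fun c2 => m c1 c2 * m c2 c3) 0).

Definition inCM (a b : R) (x : chain) : Prop := forall c, x c <> 0 -> Cab a b c.

Definition dCM (a b : R) (x : chain) : chain := fun c' =>
  if Rle_dec a (f c') then
    if Rle_dec (f c') b then Fsum (fun c => m c' c * x c) else 0
  else 0.

Definition pr (a2 : R) (x : chain) : chain := fun c =>
  if Rle_dec a2 (f c) then x c else 0.

Definition cycleCM (a b : R) (x : chain) : Prop := inCM a b x /\ dCM a b x = czero.
Definition bdryCM (a b : R) (x : chain) : Prop :=
  exists y, inCM a b y /\ dCM a b y = x.
Definition homCM (a b : R) (x1 x2 : chain) : Prop := bdryCM a b (csub x1 x2).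

(* L^b = inverse limit over a of CM_a^b w.r.t. p^b : compatible families *)
Definition family := R -> chain.
Definition inL (b : R) (X : family) : Prop :=
  (forall a, inCM a b (X a)) /\
  (forall a1 a2, Rle a1 a2 -> pr a2 (X a1) = X a2).
Definition dL (b : R) (X : family) : family := fun a => dCM a b (X a).
Definition fzero : family := fun _ => czero.
Definition fsub (X Y : family) : family := fun a => csub (X a) (Y a).

(* nu^b : H(L^b) -> varprojlim_a HM_a^b, [(x_a)_a] |-> ([x_a])_a, is bijective.
   Elements of varprojlim_a HM_a^b are compatible families of homology
   classes, given by representatives K a (cycles of CM_a^b) with
   [p^b_{a2,a1} (K a1)] = [K a2] for a1 <= a2; two such families are equal
   iff they agree classwise. *)
Definition nu_iso (b : R) : Prop :=
  (forall X1 X2 : family,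
      inL b X1 -> dL b X1 = fzero -> inL b X2 -> dL b X2 = fzero ->
      (forall a, homCM a b (X1 a) (X2 a)) ->
      exists Y, inL b Y /\ dL b Y = fsub X1 X2)
  /\
  (forall K : family,
      (forall a, cycleCM a b (K a)) ->
      (forall a1 a2, Rle a1 a2 -> homCM a2 b (pr a2 (K a1)) (K a2)) ->
      exists X, inL b X /\ dL b X = fzero /\ (forall a, homCM a b (X a) (K a))).

End FloerDefs.

(* Generic direct limit (over (R,<=)) of a direct system of chain      *)
(* complexes (X^b, d_b) with transition maps iota b2 b1 : X^b1 -> X^b2, *)
(* all represented inside an ambient type V with zero and subtraction.  *)
(* The direct limit is represented by pairs (b, x) with x in X^b,       *)
(* modulo (b1,x1) ~ (b2,x2) iff iota b b1 x1 = iota b b2 x2 for some    *)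
(* b >= b1, b2 (direct sum modulo identification of elements with      *)
(* their images).                                                      *)
Section DirLim.

Variables (V : Type) (vzero : V) (vsub : V -> V -> V)
          (mem : R -> V -> Prop) (d : R -> V -> V) (iota : R -> R -> V -> V).

Definition dl_eq (e1 e2 : R * V) : Prop :=
  exists b, Rle e1.1 b /\ Rle e2.1 b /\ iota b e1.1 e1.2 = iota b e2.1 e2.2.
Definition dl_valid (e : R * V) : Prop := mem e.1 e.2.
Definition dl_d (e : R * V) : R * V := (e.1, d e.1 e.2).
Definition dl_sub (e1 e2 : R * V) : R * V :=
  let b := Rmax e1.1 e2.1 in (b, vsub (iota b e1.1 e1.2) (iota b e2.1 e2.2)).
Definition dl_cycle (e : R * V) : Prop := dl_valid e /\ dl_eq (dl_d e) (e.1, vzero).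
Definition dl_bdry (e : R * V) : Prop :=
  exists e', dl_valid e' /\ dl_eq (dl_d e') e.
Definition dl_hom (e1 e2 : R * V) : Prop := dl_bdry (dl_sub e1 e2).
Definition cyc (b : R) (x : V) : Prop := mem b x /\ d b x = vzero.
Definition hom (b : R) (x1 x2 : V) : Prop :=
  exists y, mem b y /\ d b y = vsub x1 x2.
(* The canonical map varinjlim_b H(X^b) -> H(varinjlim_b X^b),
   class of (b,[x]) |-> [(b,x)], is bijective.  Elements of
   varinjlim_b H(X^b) are pairs (b,[x]) with x a cycle of X^b, and
   (b1,[x1]) = (b2,[x2]) iff [iota b b1 x1] = [iota b b2 x2] in H(X^b)
   for some b >= b1, b2. *)
Definition dirlim_H_iso : Prop :=
  (forall b1 x1 b2 x2, cyc b1 x1 -> cyc b2 x2 ->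
     dl_hom (b1, x1) (b2, x2) ->
     exists b, Rle b1 b /\ Rle b2 b /\ hom b (iota b b1 x1) (iota b b2 x2))
  /\
  (forall e, dl_cycle e -> exists b x, cyc b x /\ dl_hom (b, x) e).

End DirLim.

(* mu_a : varinjlim_b HM_a^b -> H(D_a), with D_a = varinjlim_b CM_a^b
   (transition maps i_a^{b2,b1} = inclusions) *)
Definition mu_a_iso (F : fieldType) (C : Type) (f : C -> R) (m : C -> C -> F)
    (a : R) : Prop :=
  @dirlim_H_iso (chain F C) (@czero F C) (@csub F C)
    (fun b => inCM f a b) (fun b => dCM f m a b) (fun _ _ x => x).

(* mu : varinjlim_b H(L^b) -> H(varinjlim_b L^b), transition maps
   L^b1 -> L^b2 induced by the inclusions i_a^{b2,b1} *)
Definition mu_iso (F : fieldType) (C : Type) (f : C -> R) (m : C -> C -> F)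
    : Prop :=
  @dirlim_H_iso (family F C) (@fzero F C) (@fsub F C)
    (fun b => inL f b) (fun b => dL f m b) (fun _ _ X => X).

Definition tame (F : fieldType) (C : Type) (f : C -> R) (m : C -> C -> F)
    : Prop :=
  (forall a : R, mu_a_iso f m a) /\ (forall b : R, nu_iso f m b) /\ mu_iso f m.

(* Main.v *)
Require Import Defs.
From Stdlib Require Import Reals Lra ClassicalEpsilon FunctionalExtensionality.
From mathcomp Require Import all_boot all_algebra.

Set Implicit Arguments.
Unset Strict Implicit.
Unset Printing Implicit Defensive.
Import GRing.Theory.
Local Open Scope ring_scope.


Section Sums.
Variables (F : fieldType) (C : Type).

Lemma sum_zero_supp (g : C -> F) (l : seq C) :
  (forall c, List.In c l -> g c = 0) -> \sum_(c <- l) g c = 0.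
Proof.
elim: l => [|c l IH] H; first by rewrite big_nil.
rewrite big_cons H /=; last by left.
rewrite IH ?add0r // => d Hd; apply: H; by right.
Qed.

Lemma sum_supp_eq (g : C -> F) (l1 l2 : seq C) :
  List.NoDup l1 -> List.NoDup l2 ->
  (forall c, g c <> 0 -> (List.In c l1 <-> List.In c l2)) ->
  \sum_(c <- l1) g c = \sum_(c <- l2) g c.
Proof.
elim: l1 l2 => [|c l1 IH] l2 N1 N2 H.
  rewrite big_nil sum_zero_supp // => d Hd.
  case: (eqVneq (g d) 0) => [//|/eqP Hn]. by have/(H d Hn) := Hd.
inversion N1 as [|c' l1' Hc N1' E]; subst.
case: (eqVneq (g c) 0) => [Hz|/eqP Hn].
  rewrite big_cons Hz add0r; apply: IH => // d Hd.
  split => [Hi|Hi]; first by apply/(H d Hd); right.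
  have/(H d Hd) := Hi; case=> // E; by rewrite -E Hz in Hd.
have Hin : List.In c l2 by apply/(H c Hn); left.
have [l2a [l2b E]] := List.in_split _ _ Hin; subst l2.
rewrite big_cons big_cat big_cons /= addrCA -big_cat; congr (_ + _).
apply: IH => //; first exact: List.NoDup_remove_1 N2.
move=> d Hd; split => Hi.
- have : List.In d (l2a ++ c :: l2b) by apply/(H d Hd); right.
  rewrite !List.in_app_iff /=; case=> [|[E|]]; [by left| |by right].
  by subst d.
- have : List.In d (c :: l1).
    apply/(H d Hd); move: Hi; rewrite !List.in_app_iff /=; tauto.
  case=> // E; subst d.
  by have := List.NoDup_remove_2 _ _ _ N2.
Qed.

Lemma FsumE (g : C -> F) (l : seq C) :
  List.NoDup l -> (forall c, g c <> 0 -> List.In c l) ->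
  Fsum g = \sum_(c <- l) g c.
Proof.
move=> N H.
have Hs : fsum g (\sum_(c <- l) g c) by exists l.
have := epsilon_spec (inhabits 0) (fsum g) (ex_intro _ _ Hs).
rewrite -/(Fsum g) => [[l' [N' [H' ->]]]].
apply: sum_supp_eq => // c Hc; split=> _; auto.
Qed.

Lemma Fsum_unique (g : C -> F) s : fsum g s -> Fsum g = s.
Proof. by case=> l [N [H ->]]; apply: FsumE. Qed.

Lemma Fsum0 (g : C -> F) : (forall c, g c = 0) -> Fsum g = 0.
Proof. move=> H; rewrite (@FsumE g [::]) ?big_nil //; by constructor. Qed.

Lemma nodup_cover (P : C -> Prop) (l : seq C) :
  (forall c, P c -> List.In c l) ->
  exists l', List.NoDup l' /\ forall c, P c -> List.In c l'.
Proof.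
move=> H.
have dec : forall x y : C, {x = y} + {x <> y}.
  by move=> x y; apply: excluded_middle_informative.
exists (List.nodup dec l); split; first exact: List.NoDup_nodup.
by move=> c /H; rewrite List.nodup_In.
Qed.

End Sums.


Section Chains.
Variables (F : fieldType) (C : Type) (f : C -> R) (m : C -> C -> F).
Hypothesis HF : floer_triple f m.

Local Notation chain := (chain F C).
Local Notation D := (dCM f m).
Local Notation P := (pr f).
Local Notation inC := (@inCM F C f).

Definition lc (k1 k2 : F) (x y : chain) : chain := fun c => k1 * x c + k2 * y c.

Lemma csubE (x y : chain) : csub x y = lc 1 (-1) x y.
Proof. by apply: functional_extensionality => c; rewrite /lc /csub mul1r mulN1r. Qed.

Lemma cover_l a b : exists l : seq C, List.NoDup l /\ forall c, Cab f a b c -> List.In c l.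
Proof.
case: (Rle_dec a b) => Hab.
  have [l Hl] := (proj1 HF) a b Hab. exact: nodup_cover Hl.
exists [::]; split; first by constructor.
move=> c [H1 H2]; exfalso; apply: Hab; exact: Rle_trans H1 H2.
Qed.

Lemma m_lt c1 c2 : m c1 c2 <> 0 -> Rlt (f c1) (f c2).
Proof. exact: (proj1 (proj2 HF)). Qed.

Lemma Fsum_in a b (x : chain) (l : seq C) c' :
  inC a b x -> List.NoDup l -> (forall c, Cab f a b c -> List.In c l) ->
  Fsum (fun c => m c' c * x c) = \sum_(c <- l) m c' c * x c.
Proof.
move=> Hx N Hl; apply: FsumE => // c Hc; apply: Hl; apply: Hx => E.
by apply: Hc; rewrite E mulr0.
Qed.

Lemma dCM_lin a b k1 k2 (x y : chain) : inC a b x -> inC a b y ->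
  D a b (lc k1 k2 x y) = lc k1 k2 (D a b x) (D a b y).
Proof.
move=> Hx Hy; have [l [N Hl]] := cover_l a b.
have Hxy : inC a b (lc k1 k2 x y).
  move=> c; rewrite /lc => H; case: (eqVneq (x c) 0) => [E|/eqP E]; last exact: Hx.
  apply: Hy => E'; apply: H; by rewrite E E' !mulr0 addr0.
apply: functional_extensionality => c'; rewrite /lc /dCM.
case: Rle_dec => ?; last by rewrite !mulr0 addr0.
case: Rle_dec => ?; last by rewrite !mulr0 addr0.
rewrite (Fsum_in c' Hxy N Hl) (Fsum_in c' Hx N Hl) (Fsum_in c' Hy N Hl).
rewrite !mulr_sumr -big_split /=; apply: eq_bigr => c _.
by rewrite mulrDr !mulrA [m c' c * k1]mulrC [m c' c * k2]mulrC.
Qed.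

Lemma dCM_sub a b (x y : chain) : inC a b x -> inC a b y ->
  D a b (csub x y) = csub (D a b x) (D a b y).
Proof. by move=> Hx Hy; rewrite !csubE dCM_lin. Qed.

Lemma dCM0 a b : D a b ((@czero F C)) = (@czero F C).
Proof.
apply: functional_extensionality => c'; rewrite /dCM.
case: Rle_dec => ? //; case: Rle_dec => ? //.
by apply: Fsum0 => c; rewrite /czero mulr0.
Qed.

Lemma dCM_ext a b0 b (x : chain) : inC a b0 x -> Rle b0 b -> D a b x = D a b0 x.
Proof.
move=> Hx Hb; apply: functional_extensionality => c'; rewrite /dCM.
case: Rle_dec => Ha //; case: (Rle_dec (f c') b) => H1; case: (Rle_dec (f c') b0) => H0 //.
- apply: Fsum0 => c; case: (eqVneq (x c) 0) => [->|/eqP E]; first by rewrite mulr0.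
  case: (eqVneq (m c' c) 0) => [->|/eqP E']; first by rewrite mul0r.
  exfalso; have [_ Hc] := Hx c E; have := m_lt E'.
  move=> Hlt; apply: H0; apply: Rle_trans (Rlt_le _ _ Hlt) Hc.
- exfalso; apply: H1; exact: Rle_trans H0 Hb.
Qed.

Lemma pr_dCM a1 a2 b (x : chain) : Rle a1 a2 -> P a2 (D a1 b x) = D a2 b (P a2 x).
Proof.
move=> Ha; apply: functional_extensionality => c'; rewrite /dCM /pr.
case: Rle_dec => H2 //; case: Rle_dec => H1; last first.
  exfalso; apply: H1; exact: Rle_trans Ha H2.
case: Rle_dec => Hb //; congr Fsum; apply: functional_extensionality => c.
case: Rle_dec => Hc //.
case: (eqVneq (m c' c) 0) => [->|/eqP E]; first by rewrite !mul0r.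
exfalso; apply: Hc; apply: Rle_trans H2 (Rlt_le _ _ (m_lt E)).
Qed.

Lemma dCM_in a b (x : chain) : inC a b (D a b x).
Proof. move=> c; rewrite /dCM; case: Rle_dec => H1; case: Rle_dec => H2 //. Qed.

Lemma pr_in a1 a2 b (x : chain) : Rle a1 a2 -> inC a1 b x -> inC a2 b (P a2 x).
Proof.
move=> Ha Hx c; rewrite /pr; case: Rle_dec => H //.
by move/Hx => [_ ?].
Qed.

Lemma pr_id a b (x : chain) : inC a b x -> P a x = x.
Proof.
move=> Hx; apply: functional_extensionality => c; rewrite /pr.
case: Rle_dec => H //; case: (eqVneq (x c) 0) => [->//|/eqP E].
by have [? _] := Hx c E.
Qed.

Lemma pr_pr a1 a2 (x : chain) : Rle a1 a2 -> P a2 (P a1 x) = P a2 x.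
Proof.
move=> Ha; apply: functional_extensionality => c; rewrite /pr.
case: Rle_dec => H2 //; case: Rle_dec => H1 //.
exfalso; apply: H1; exact: Rle_trans Ha H2.
Qed.

Lemma pr_lin a k1 k2 (x y : chain) : P a (lc k1 k2 x y) = lc k1 k2 (P a x) (P a y).
Proof.
apply: functional_extensionality => c; rewrite /pr /lc.
by case: Rle_dec => ? //; rewrite !mulr0 addr0.
Qed.

Lemma pr_sub a (x y : chain) : P a (csub x y) = csub (P a x) (P a y).
Proof. by rewrite !csubE pr_lin. Qed.

Lemma pr0 a : P a ((@czero F C)) = (@czero F C).
Proof. by apply: functional_extensionality => c; rewrite /pr; case: Rle_dec. Qed.

Lemma in_lc a b k1 k2 (x y : chain) : inC a b x -> inC a b y -> inC a b (lc k1 k2 x y).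
Proof.
move=> Hx Hy c; rewrite /lc => H; case: (eqVneq (x c) 0) => [E|/eqP E]; last exact: Hx.
apply: Hy => E'; apply: H; by rewrite E E' !mulr0 addr0.
Qed.

Lemma in_sub a b (x y : chain) : inC a b x -> inC a b y -> inC a b (csub x y).
Proof. by rewrite csubE; apply: in_lc. Qed.

Lemma in0 a b : inC a b ((@czero F C)).
Proof. by move=> c; rewrite /czero. Qed.

Lemma in_monob a b0 b (x : chain) : Rle b0 b -> inC a b0 x -> inC a b x.
Proof. move=> Hb Hx c /Hx [H1 H2]; split => //; exact: Rle_trans H2 Hb. Qed.

Lemma in_monoa a0 a b (x : chain) : Rle a a0 -> inC a0 b x -> inC a b x.
Proof. move=> Ha Hx c /Hx [H1 H2]; split => //; exact: Rle_trans Ha H1. Qed.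

Lemma dCM2 a b (x : chain) : inC a b x -> D a b (D a b x) = (@czero F C).
Proof.
move=> Hx; have [l [N Hl]] := cover_l a b.
apply: functional_extensionality => c''; rewrite {1}/dCM /czero.
case: Rle_dec => Ha //; case: Rle_dec => Hb //.
rewrite (Fsum_in c'' (@dCM_in a b x) N Hl).
have E1 : forall c', m c'' c' * D a b x c' = m c'' c' * \sum_(c <- l) m c' c * x c.
  move=> c'; case: (eqVneq (m c'' c') 0) => [->|/eqP E]; first by rewrite !mul0r.
  have Hlt := m_lt E.
  rewrite /dCM; case: Rle_dec => H1; last first.
    exfalso; apply: H1; apply: Rle_trans Ha (Rlt_le _ _ Hlt).
  case: Rle_dec => H2; first by rewrite (Fsum_in c' Hx N Hl).
  rewrite sum_zero_supp ?mulr0 // => c _.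
  case: (eqVneq (x c) 0) => [->|/eqP E2]; first by rewrite mulr0.
  case: (eqVneq (m c' c) 0) => [->|/eqP E3]; first by rewrite mul0r.
  exfalso; have [_ Hc] := Hx c E2; apply: H2.
  apply: Rle_trans (Rlt_le _ _ (m_lt E3)) Hc.
rewrite (eq_bigr _ (fun c' _ => E1 c')).
under eq_bigr do rewrite mulr_sumr.
rewrite exchange_big /=; apply: sum_zero_supp => c _.
under eq_bigr do rewrite mulrA.
rewrite -mulr_suml.
case: (eqVneq (x c) 0) => [->|/eqP E2]; first by rewrite mulr0.
have [Hc1 Hc2] := Hx c E2.
suff -> : \sum_(i <- l) m c'' i * m i c = 0 by rewrite mul0r.
rewrite -(FsumE (g := fun i => m c'' i * m i c) N).
  exact: Fsum_unique ((proj2 (proj2 HF)) c'' c).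
move=> c2 H; apply: Hl.
case: (eqVneq (m c'' c2) 0) => [E|/eqP E]; first by rewrite E mul0r in H.
case: (eqVneq (m c2 c) 0) => [E'|/eqP E']; first by rewrite E' mulr0 in H.
split.
  apply: Rle_trans Ha (Rlt_le _ _ (m_lt E)).
apply: Rle_trans (Rlt_le _ _ (m_lt E')) Hc2.
Qed.

End Chains.


Section Mu.
Variables (F : fieldType) (C : Type) (f : C -> R) (m : C -> C -> F).
Hypothesis HF : floer_triple f m.

Local Notation chain := (chain F C).
Local Notation D := (dCM f m).
Local Notation P := (pr f).
Local Notation inC := (@inCM F C f).

Lemma csubxx (x : chain) : csub x x = @czero F C.
Proof. by apply: functional_extensionality => c; rewrite /csub subrr. Qed.

Lemma mu_a_ok a : mu_a_iso f m a.
Proof.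
rewrite /mu_a_iso /dirlim_H_iso; split.
- move=> b1 x1 b2 x2 _ _; rewrite /dl_hom /dl_bdry /dl_eq /dl_valid /dl_d /dl_sub /=.
  move=> [[b' y] [Hv [b [H1 [H2 E]]]]] /=; simpl in *.
  exists b; split; first exact: Rle_trans (Rmax_l b1 b2) H2.
  split; first exact: Rle_trans (Rmax_r b1 b2) H2.
  exists y; split; first exact: in_monob H1 Hv.
  by rewrite (dCM_ext HF Hv H1).
- move=> [b x]; rewrite /dl_cycle /dl_hom /dl_bdry /dl_eq /dl_valid /dl_d /dl_sub /=.
  move=> [Hv [b' [_ [_ E]]]].
  exists b, x; split; first by split.
  exists (b, @czero F C); split; first exact: in0.
  exists (Rmax b b); simpl; split; first exact: Rmax_l.
  split; first exact: Rle_refl.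
  by rewrite dCM0 csubxx.
Qed.

Lemma inL_mono b0 b (X : Defs.family F C) : Rle b0 b -> inL f b0 X -> inL f b X.
Proof. move=> Hb [H1 H2]; split => // a; exact: in_monob Hb (H1 a). Qed.

Lemma dL_ext b0 b (X : Defs.family F C) : inL f b0 X -> Rle b0 b -> dL f m b X = dL f m b0 X.
Proof.
move=> [H1 _] Hb; apply: functional_extensionality => a; rewrite /dL.
by rewrite (dCM_ext HF (H1 a) Hb).
Qed.

Lemma dL0 b : dL f m b (@fzero F C) = @fzero F C.
Proof. apply: functional_extensionality => a; exact: dCM0. Qed.

Lemma inL0 b : inL f b (@fzero F C).
Proof. split => [a|a1 a2 _]; [exact: in0 | exact: pr0]. Qed.

Lemma fsubxx (X : Defs.family F C) : fsub X X = @fzero F C.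
Proof. apply: functional_extensionality => a; exact: csubxx. Qed.

Lemma mu_ok : mu_iso f m.
Proof.
rewrite /mu_iso /dirlim_H_iso; split.
- move=> b1 x1 b2 x2 _ _; rewrite /dl_hom /dl_bdry /dl_eq /dl_valid /dl_d /dl_sub /=.
  move=> [[b' y] [Hv [b [H1 [H2 E]]]]] /=; simpl in *.
  exists b; split; first exact: Rle_trans (Rmax_l b1 b2) H2.
  split; first exact: Rle_trans (Rmax_r b1 b2) H2.
  exists y; split; first exact: inL_mono H1 Hv.
  by rewrite (dL_ext Hv H1).
- move=> [b x]; rewrite /dl_cycle /dl_hom /dl_bdry /dl_eq /dl_valid /dl_d /dl_sub /=.
  move=> [Hv [b' [_ [_ E]]]].
  exists b, x; split; first by split.
  exists (b, @fzero F C); split; first exact: inL0.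
  exists (Rmax b b); simpl; split; first exact: Rmax_l.
  split; first exact: Rle_refl.
  by rewrite dL0 fsubxx.
Qed.

End Mu.


Definition pb (P : Prop) : bool := if excluded_middle_informative P then true else false.
Lemma pbP (P : Prop) : pb P = true <-> P.
Proof. by rewrite /pb; case: excluded_middle_informative. Qed.

Lemma dec_stab (s : nat -> nat) : (forall k, (s k.+1 <= s k)%N) ->
  exists N, forall k, (N <= k)%N -> s k = s N.
Proof.
have mono : forall (s : nat -> nat), (forall k, (s k.+1 <= s k)%N) ->
   forall n k, (n <= k)%N -> (s k <= s n)%N.
  move=> t Ht n k /subnK <-; elim: (k - n)%N => [|j IH] //=.
  by rewrite addSn; apply: leq_trans (Ht _) IH.
suff : forall v (s : nat -> nat), (forall k, (s k.+1 <= s k)%N) -> (s 0 <= v)%N ->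
  exists N, forall k, (N <= k)%N -> s k = s N by move=> H Hs; exact: H _ _ Hs (leqnn _).
elim=> [|v IH] t Ht Hv.
  exists 0%N => k _; have h := mono t Ht 0%N k (leq0n k).
  move: Hv; rewrite leqn0 => /eqP E; rewrite E in h *; apply/eqP; by rewrite -leqn0.
case: (classic (exists k, (t k < t 0)%N)) => [[k0 Hk0]|Hno].
  have Ht' : forall j, (t (k0 + j.+1)%N <= t (k0 + j)%N)%N by move=> j; rewrite addnS; apply: Ht.
  have Hv' : (t (k0 + 0)%N <= v)%N by rewrite addn0 -ltnS; apply: leq_trans Hk0 Hv.
  have [N' HN'] := IH (fun j => t (k0 + j)%N) Ht' Hv'.
  exists (k0 + N')%N => k Hk; rewrite -(subnKC (leq_trans (leq_addr _ _) Hk)).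
  apply: HN'; by rewrite -(leq_add2l k0) subnKC // (leq_trans (leq_addr _ _) Hk).
exists 0%N => k _; apply/eqP; rewrite eqn_leq (mono t Ht 0%N k (leq0n k)) /=.
by rewrite leqNgt; apply/negP => H; apply: Hno; exists k.
Qed.

Lemma count_sub (T : Type) (a1 a2 : pred T) (s : seq T) :
  (forall x, a1 x -> a2 x) -> (count a1 s <= count a2 s)%N.
Proof.
move=> H; elim: s => //= x s IH; apply: leq_add => //.
by case E: (a1 x) => //; rewrite (H _ E).
Qed.


Lemma count_eq_sub (a1 a2 : pred nat) (s : seq nat) :
  (forall x, a1 x -> a2 x) -> count a1 s = count a2 s ->
  forall i, i \in s -> a2 i -> a1 i.
Proof.
move=> H; elim: s => //= x s IH E i.
have Hs := count_sub s H.
move: E; case E1: (a1 x); case E2: (a2 x) => /= E.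
- move/eqP: E; rewrite eqn_add2l => /eqP E.
  rewrite inE => /orP [/eqP->|Hi]; first by rewrite E1.
  exact: IH.
- by rewrite (H _ E1) in E2.
- rewrite add0n add1n in E; by move: Hs; rewrite E ltnn.
- rewrite !add0n in E.
  rewrite inE => /orP [/eqP->|Hi]; first by rewrite E2.
  exact: IH.
Qed.

Section Piv.
Variables (F : fieldType) (C : Type) (l : seq C).
Local Notation chain := (chain F C).

Definition subsp (W : chain -> Prop) :=
  W (@czero F C) /\ (forall k1 k2 x y, W x -> W y -> W (lc k1 k2 x y)) /\
  (forall x c, W x -> x c <> 0 -> List.In c l).

Definition lead (x : chain) := find (fun c => x c != 0) l.
Definition piv (W : chain -> Prop) (i : nat) := pb (exists w, W w /\ lead w = i).
Definition mu (W : chain -> Prop) := count (piv W) (iota 0 (size l)).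

Lemma In_nth (c : C) (s : seq C) : List.In c s -> exists j, (j < size s)%N /\ nth c s j = c.
Proof.
elim: s => //= d s IH [->|/IH [j [Hj E]]]; first by exists 0%N.
by exists j.+1.
Qed.

Lemma lead_size (x : chain) : (forall c, x c <> 0 -> List.In c l) ->
  lead x = size l -> x = @czero F C.
Proof.
move=> Hx E; apply: functional_extensionality => c; rewrite /czero.
case: (eqVneq (x c) 0) => // /eqP /Hx /In_nth [j [Hj Ej]].
have := before_find c (a := fun c => x c != 0) (s := l) (i := j).
rewrite -/(lead x) E Hj Ej => /(_ isT) /negbFE /eqP //.
Qed.

Lemma lead_gt (x : chain) (c0 : C) i : (i < size l)%N ->
  (forall j, (j <= i)%N -> x (nth c0 l j) = 0) -> (i < lead x)%N.
Proof.
move=> Hi H; rewrite ltnNge; apply/negP => Hle.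
have Hh : has (fun c => x c != 0) l by rewrite has_find; apply: leq_ltn_trans Hle Hi.
have := nth_find c0 Hh; by rewrite -/(lead x) H // eqxx.
Qed.

Lemma elim_piv (W' W : chain -> Prop) : subsp W' -> subsp W ->
  (forall x, W' x -> W x) -> (forall i, (i < size l)%N -> piv W i -> piv W' i) ->
  forall x, W x -> W' x.
Proof.
move=> [Z' [L' S']] [Z [L S]] Hsub Hp.
suff : forall d x, W x -> (size l - lead x <= d)%N -> W' x.
  by move=> H x Hx; apply: (H (size l)) => //; exact: leq_subr.
elim=> [|d IH] x Hx Hd.
  have -> : x = @czero F C => //.
  apply: lead_size; first by move=> c; apply: S.
  apply/eqP; rewrite eqn_leq; rewrite leqn0 subn_eq0 in Hd; rewrite Hd andbT.
  exact: find_size.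
have [Hle|Hlt] := leqP (size l) (lead x).
  have -> : x = @czero F C => //.
  apply: lead_size; first by move=> c; apply: S.
  apply/eqP; rewrite eqn_leq Hle andbT; exact: find_size.
set i := lead x.
have : piv W' i by apply: Hp => //; apply/pbP; exists x.
move/pbP => [w' [Hw' Ei]].
have [c0 _] : exists c0 : C, True by move: Hlt; case: l => [|c0 ?] // _; exists c0.
have Hx0 : x (nth c0 l i) != 0.
  have Hh : has (fun c => x c != 0) l by rewrite has_find.
  exact: (nth_find c0 Hh).
have Hw0 : w' (nth c0 l i) != 0.
  have Hh : has (fun c => w' c != 0) l by rewrite has_find -/(lead w') Ei.
  by have := nth_find c0 Hh; rewrite -/(lead w') Ei.
set k := x (nth c0 l i) / w' (nth c0 l i).
set x'' := lc 1 (- k) x w'.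
have Hx'' : W x'' by apply: L => //; apply: Hsub.
have Hl'' : (i < lead x'')%N.
  apply: (@lead_gt x'' c0 i Hlt) => j Hj; rewrite /x'' /lc mul1r mulNr.
  move: Hj; rewrite leq_eqVlt => /orP [/eqP ->|Hj].
    by rewrite /k mulfVK ?subrr.
  have H1 := before_find c0 (a := fun c => x c != 0) (s := l) Hj.
  have H2 := before_find c0 (a := fun c => w' c != 0) (s := l) (i := j).
  rewrite -/(lead w') Ei in H2.
  move/negbFE/eqP: H1 => ->; move/negbFE/eqP: (H2 Hj) => ->.
  by rewrite mulr0 subrr.
have HW'' : W' x''.
  apply: IH => //; apply: leq_trans (leq_sub2l _ Hl'') _.
  by rewrite subnS -ltnS prednK // subn_gt0.
have -> : x = lc 1 k x'' w'.
  apply: functional_extensionality => c; rewrite /x'' /lc !mul1r mulNr subrK //.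
exact: L'.
Qed.

Lemma mu_mono (W' W : chain -> Prop) : (forall x, W' x -> W x) -> (mu W' <= mu W)%N.
Proof.
move=> H; apply: count_sub => i /pbP [w [Hw E]]; apply/pbP; exists w; split => //; exact: H.
Qed.

Lemma stab (W : nat -> chain -> Prop) : (forall k, subsp (W k)) ->
  (forall k x, W k.+1 x -> W k x) ->
  exists N, forall k, (N <= k)%N -> forall x, W N x -> W k x.
Proof.
move=> Hs Hd.
have mono : forall n k, (n <= k)%N -> forall x, W k x -> W n x.
  move=> n k /subnK <-; elim: (k - n)%N => [|j IH] //= x.
  by rewrite addSn => /Hd /IH.
have [N HN] := dec_stab (s := fun k => mu (W k)) (fun k => mu_mono (Hd k)).
exists N => k Hk; apply: elim_piv => //; first exact: mono.
move=> i Hi; apply: (count_eq_sub (a1 := piv (W k)) (a2 := piv (W N)) (s := iota 0 (size l))).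
- move=> j /pbP [w [Hw E]]; apply/pbP; exists w; split => //; exact: mono Hw.
- exact: HN.
- by rewrite mem_iota.
Qed.

End Piv.


Lemma dep_choice (A : Type) (P : nat -> A -> Prop) (Q : nat -> A -> A -> Prop) x0 :
  P 0%N x0 -> (forall n x, P n x -> exists y, P n.+1 y /\ Q n x y) ->
  exists g : nat -> A, forall n, P n (g n) /\ Q n (g n) (g n.+1).
Proof.
move=> H0 H.
have step : forall n (x : {x | P n x}), {y | P n.+1 y /\ Q n (proj1_sig x) y}.
  move=> n [x Hx]; apply: constructive_indefinite_description; exact: H _ _ Hx.
pose g' := fix g' n : {x | P n x} := match n return {x | P n x} with
  | 0 => exist _ x0 H0
  | k.+1 => exist _ (proj1_sig (step k (g' k))) (proj1 (proj2_sig (step k (g' k)))) end.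
exists (fun n => proj1_sig (g' n)) => n; split; first exact: proj2_sig (g' n).
exact: proj2 (proj2_sig (step n (g' n))).
Qed.

Definition an (n : nat) : R := Ropp (INR n).

Lemma an_le n k : (n <= k)%N -> Rle (an k) (an n).
Proof. move=> /leP H; apply: Ropp_le_contravar; exact: le_INR. Qed.

Lemma an_ex r : exists n, Rle (an n) r.
Proof.
have [n Hn] := INR_archimed 1 (Ropp r) Rlt_0_1.
exists n; rewrite /an; rewrite Rmult_1_r in Hn; lra.
Qed.

Section Nu.
Variables (F : fieldType) (C : Type) (f : C -> R) (m : C -> C -> F).
Hypothesis HF : floer_triple f m.

Local Notation chain := (chain F C).
Local Notation D := (dCM f m).
Local Notation P := (pr f).
Local Notation inC := (@inCM F C f).
Local Notation fam := (Defs.family F C).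

Lemma seq_family b (Y : nat -> chain) : (forall n, inC (an n) b (Y n)) ->
  (forall n, P (an n) (Y n.+1) = Y n) ->
  exists X : fam, inL f b X /\ forall n r, Rle (an n) r -> X r = P r (Y n).
Proof.
move=> HY HP.
have compat : forall n k, (n <= k)%N -> P (an n) (Y k) = Y n.
  move=> n k /subnK <-; elim: (k - n)%N => [|j IH] /=; first exact: pr_id (HY n).
  rewrite addSn -(@pr_pr F C f (an (j + n)) (an n) (Y (j + n).+1) (an_le (leq_addl j n))).
  by rewrite HP.
have indep : forall n k r, Rle (an n) r -> Rle (an k) r -> P r (Y n) = P r (Y k).
  move=> n k r Hn Hk.
  rewrite -(compat n (maxn n k)) ?leq_maxl // -(compat k (maxn n k)) ?leq_maxr //.
  by rewrite !pr_pr.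
pose N r := proj1_sig (constructive_indefinite_description _ (an_ex r)).
have HN : forall r, Rle (an (N r)) r.
  move=> r; exact: proj2_sig (constructive_indefinite_description _ (an_ex r)).
exists (fun r => P r (Y (N r))); split.
  split=> [r|a1 a2 Ha]; first exact: pr_in (HN r) (HY _).
  rewrite pr_pr //; apply: indep => //; exact: Rle_trans (HN a1) Ha.
move=> n r Hn; exact: indep.
Qed.

Lemma hom_trans a b (x y z : chain) : homCM f m a b x y -> homCM f m a b y z ->
  homCM f m a b x z.
Proof.
move=> [u1 [H1 E1]] [u2 [H2 E2]]; exists (lc 1 1 u1 u2); split; first exact: in_lc.
rewrite (dCM_lin HF) // E1 E2; apply: functional_extensionality => c.
by rewrite /lc /csub !mul1r addrA subrK.
Qed.

Lemma hom_refl a b (x : chain) : homCM f m a b x x.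
Proof. exists (@czero F C); split; [exact: in0 | by rewrite dCM0 csubxx]. Qed.

Lemma hom_pr a1 a2 b (x y : chain) : Rle a1 a2 -> homCM f m a1 b x y ->
  homCM f m a2 b (P a2 x) (P a2 y).
Proof.
move=> Ha [u [Hu E]]; exists (P a2 u); split; first exact: pr_in Ha Hu.
by rewrite -(pr_dCM HF _ _ Ha) E pr_sub.
Qed.

Lemma nu_surj b (K : fam) :
  (forall a, cycleCM f m a b (K a)) ->
  (forall a1 a2, Rle a1 a2 -> homCM f m a2 b (pr f a2 (K a1)) (K a2)) ->
  exists X, inL f b X /\ dL f m b X = @fzero F C /\ (forall a, homCM f m a b (X a) (K a)).
Proof.
move=> hk hk2.
pose Pn n y := cycleCM f m (an n) b y /\ homCM f m (an n) b y (K (an n)).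
have step : forall n y, Pn n y -> exists y', Pn n.+1 y' /\ P (an n) y' = y.
  move=> n y [[Hy Dy] Hh].
  have Hle : Rle (an n.+1) (an n) by apply: an_le.
  have [u1 [Hu1 E1]] := hk2 _ _ Hle.
  have [u2 [Hu2 E2]] := Hh.
  have [HK' DK'] := hk (an n.+1).
  set w := csub u1 u2.
  have Hw : inC (an n) b w by apply: in_sub.
  have Dw : D (an n) b w = csub (P (an n) (K (an n.+1))) y.
    rewrite (dCM_sub HF) // E1 E2; apply: functional_extensionality => c.
    by rewrite /csub opprB addrA subrK.
  have Hw' : inC (an n.+1) b w := in_monoa Hle Hw.
  exists (csub (K (an n.+1)) (D (an n.+1) b w)); split; first split.
  - split; first by apply: in_sub => //; exact: dCM_in.
    by rewrite (dCM_sub HF) //; [rewrite DK' (dCM2 HF) // csubxx | exact: dCM_in].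
  - exists (csub (@czero F C) w); split; first by apply: in_sub => //; exact: in0.
    rewrite (dCM_sub HF (@in0 F C f (an n.+1) b) Hw').
    rewrite dCM0; apply: functional_extensionality => c.
    by rewrite /csub sub0r addrAC subrr add0r.
  - rewrite pr_sub (pr_dCM HF) // (pr_id Hw) Dw; apply: functional_extensionality => c.
    by rewrite /csub opprB addrCA subrr addr0.
have [Y HY] := dep_choice (P := Pn) (Q := fun n x y => P (an n) y = x)
  (x0 := K (an 0%N)) (conj (hk _) (hom_refl _ _ _)) step.
have [X [HX HXY]] := seq_family (b := b) (Y := Y)
  (fun n => proj1 (proj1 (proj1 (HY n)))) (fun n => proj2 (HY n)).
exists X; split => //; split.
  apply: functional_extensionality => r; have [n Hn] := an_ex r.
  rewrite /dL (HXY n r Hn) -(pr_dCM HF _ _ Hn).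
  by rewrite (proj2 (proj1 (proj1 (HY n)))) pr0.
move=> r; have [n Hn] := an_ex r; rewrite (HXY n r Hn).
apply: hom_trans (hom_pr Hn (proj2 (proj1 (HY n)))) (hk2 _ _ Hn).
Qed.

End Nu.


Section ML.
Variables (F : fieldType) (C : Type) (f : C -> R) (m : C -> C -> F).
Hypothesis HF : floer_triple f m.

Local Notation chain := (chain F C).
Local Notation D := (dCM f m).
Local Notation P := (pr f).
Local Notation inC := (@inCM F C f).
Local Notation fam := (Defs.family F C).
Local Notation cz := (@czero F C).

Lemma ML b (Z : fam) : inL f b Z -> (forall a, exists y, inC a b y /\ D a b y = Z a) ->
  exists Y, inL f b Y /\ dL f m b Y = Z.
Proof.
move=> [HZ1 HZ2] bZ.
pose S k z := inC (an k) b z /\ D (an k) b z = Z (an k).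
have S_pr : forall k k' z, (k <= k')%N -> S k' z -> S k (P (an k) z).
  move=> k k' z Hk [Hz Ez]; have Ha := an_le Hk; split; first exact: pr_in Ha Hz.
  by rewrite -(pr_dCM HF _ _ Ha) Ez HZ2.
pose Im n k y := exists z, S k z /\ y = P (an n) z.
have Im_mono : forall n k k' y, (n <= k)%N -> (k <= k')%N -> Im n k' y -> Im n k y.
  move=> n k k' y Hn Hk [z [Sz ->]]; exists (P (an k) z); split; first exact: S_pr Sz.
  by rewrite pr_pr //; apply: an_le.
pose Wd n k y := exists z, inC (an k) b z /\ D (an k) b z = cz /\ y = P (an n) z.
have Wd_mono : forall n k k' y, (n <= k)%N -> (k <= k')%N -> Wd n k' y -> Wd n k y.
  move=> n k k' y Hn Hk [z [Hz [Ez ->]]]; exists (P (an k) z); split.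
    exact: pr_in (an_le Hk) Hz.
  split; first by rewrite -(pr_dCM HF _ _ (an_le Hk)) Ez pr0.
  by rewrite pr_pr //; apply: an_le.
have Wd_sub : forall n k l, (n <= k)%N -> (forall c, Cab f (an n) b c -> List.In c l) ->
    subsp l (Wd n k).
  move=> n k l Hk Hl; split; [|split].
  - exists cz; split; first exact: in0.
    by rewrite dCM0 pr0.
  - move=> k1 k2 x y [z1 [H1 [E1 ->]]] [z2 [H2 [E2 ->]]].
    exists (lc k1 k2 z1 z2); split; first exact: in_lc.
    rewrite (dCM_lin HF) // E1 E2 pr_lin; split => //.
    by apply: functional_extensionality => c; rewrite /lc /czero !mulr0 addr0.
  - move=> x c [z [Hz [_ ->]]] Hc; apply: Hl.
    exact: (pr_in (an_le Hk) Hz) Hc.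
have Im_diff : forall n k y0 y, Im n k y0 -> Im n k y -> Wd n k (csub y y0).
  move=> n k y0 y [z0 [[H0 E0] ->]] [z [[H E] ->]].
  exists (csub z z0); split; first exact: in_sub.
  by rewrite (dCM_sub HF) // E E0 csubxx pr_sub.
have Im_add : forall n k y0 w, Im n k y0 -> Wd n k w -> Im n k (lc 1 1 y0 w).
  move=> n k y0 w [z0 [[H0 E0] ->]] [z [H [E ->]]].
  exists (lc 1 1 z0 z); split; last by rewrite pr_lin.
  split; first exact: in_lc.
  rewrite (dCM_lin HF) // E E0; apply: functional_extensionality => c.
  by rewrite /lc /czero !mul1r addr0.
have stabW : forall n, exists N, (n <= N)%N /\
    forall k, (N <= k)%N -> forall y, Wd n N y -> Wd n k y.
  move=> n; have [l [_ Hl]] := cover_l HF (an n) b.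
  have Hs : forall j, subsp l (Wd n (n + j)%N).
    move=> j; exact: Wd_sub (leq_addr _ _) Hl.
  have Hd : forall j y, Wd n (n + j.+1)%N y -> Wd n (n + j)%N y.
    move=> j y; apply: Wd_mono; [exact: leq_addr | by rewrite addnS].
  have [N0 HN0] := stab Hs Hd.
  exists (n + N0)%N; split; first exact: leq_addr.
  move=> k Hk y Hy; have Hnk : (n <= k)%N := leq_trans (leq_addr _ _) Hk.
  rewrite -(subnKC Hnk); apply: HN0 Hy.
  by rewrite -(leq_add2l n) subnKC.
have stabIm : forall n, exists N, (n <= N)%N /\
    forall k, (N <= k)%N -> forall y, Im n N y -> Im n k y.
  move=> n; have [N [HnN HN]] := stabW n; exists N; split => // k Hk y Hy.
  have [z [Hz Ez]] := bZ (an k).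
  have Hy0 : Im n k (P (an n) z) by exists z.
  have Hy0' : Im n N (P (an n) z) := Im_mono _ _ _ _ HnN Hk Hy0.
  have HW := HN k Hk _ (Im_diff _ _ _ _ Hy0' Hy).
  have -> : y = lc 1 1 (P (an n) z) (csub y (P (an n) z)).
    by apply: functional_extensionality => c; rewrite /lc /csub !mul1r addrCA subrr addr0.
  exact: Im_add.
pose T n y := forall k, (n <= k)%N -> Im n k y.
have Tne : forall n, exists y, T n y.
  move=> n; have [N [HnN HN]] := stabIm n; have [z [Hz Ez]] := bZ (an N).
  exists (P (an n) z) => k Hk; have HI : Im n N (P (an n) z) by exists z.
  case: (leqP N k) => HkN; first exact: HN.
  exact: Im_mono Hk (ltnW HkN) HI.
have Tstep : forall n y, T n y -> exists y', T n.+1 y' /\ P (an n) y' = y.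
  move=> n y Ty; have [N1 [H1 HN1]] := stabIm n.+1.
  have HnK : (n <= maxn N1 n.+1)%N by apply: leq_trans (leqnSn n) (leq_maxr _ _).
  have [z [Sz ->]] := Ty _ HnK.
  exists (P (an n.+1) z); split; last by rewrite pr_pr //; apply: an_le.
  have HI : Im n.+1 (maxn N1 n.+1) (P (an n.+1) z) by exists z.
  move=> k Hk; case: (leqP N1 k) => HkN.
    apply: HN1 => //; exact: Im_mono H1 (leq_maxl _ _) HI.
  exact: Im_mono Hk (leq_trans (ltnW HkN) (leq_maxl _ _)) HI.
have [y0 Hy0] := Tne 0%N.
have [Y HY] := dep_choice (P := T) (Q := fun n x y => P (an n) y = x) Hy0 Tstep.
have TS : forall n y, T n y -> S n y.
  move=> n y Ty; have [z [Sz ->]] := Ty n (leqnn n).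
  by rewrite (pr_id (proj1 Sz)).
have [X [HX HXY]] := seq_family (b := b) (Y := Y)
  (fun n => proj1 (TS _ _ (proj1 (HY n)))) (fun n => proj2 (HY n)).
exists X; split => //.
apply: functional_extensionality => r; have [n Hn] := an_ex r.
rewrite /dL (HXY n r Hn) -(pr_dCM HF _ _ Hn).
by rewrite (proj2 (TS _ _ (proj1 (HY n)))) HZ2.
Qed.

Lemma nu_ok b : nu_iso f m b.
Proof.
split; last first.
  move=> K; exact: (@nu_surj F C f m HF b K).
move=> X1 X2 [H11 H12] D1 [H21 H22] D2 Hh.
apply: ML.
  split => [a|a1 a2 Ha]; first exact: in_sub.
  by rewrite /fsub pr_sub H12 // H22.
move=> a; exact: Hh a.
Qed.

End ML.

Theorem mainTheorem6 (F : fieldType) (C : Type) (f : C -> R) (m : C -> C -> F) :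
  floer_triple f m -> tame f m.
Proof.
move=> HF; split; first by move=> a; exact: (mu_a_ok HF a).
split; first by move=> b; exact: (nu_ok HF b).
exact: (mu_ok HF).
Qed.
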